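(* For all $q\ge 4$ and all integers $n\ge 1$, $\kappa^{\min}_{n,q}\ge \lfloor n/2-\log_q(n)\rfloor$.
   Context: Let $q\ge 2$, $A=\{0,1,\dots,q-1\}$, $[n]=\{1,\dots,n\}$, and let $F(n,q)$ be the set of all maps $A^n\to A^n$. For $f\in F(m,q)$ and $i\in[m]$, $f_i$ is the $i$-th coordinate function and $f^i(x)=(x_1,\dots,x_{i-1},f_i(x),x_{i+1},\dots,x_m)$; for a word $w=(w_1,\dots,w_t)$ over $[m]$, $f^w=f^{w_t}\circ\cdots\circ f^{w_1}$. $\Pi([m])$ is the set of permutations of $[m]$ written as words $(w_1,\dots,w_m)$. $\mathrm{pr}_{[n]}:A^m\to A^n$ is the projection onto the first $n$ coordinates. For $m\ge n$, $(f,w)$ with $f\in F(m,q)$, $w\in\Pi([m])$ sequentializes $h\in F(n,q)$ if $\mathrm{pr}_{[n]}\circ f^w=h\circ\mathrm{pr}_{[n]}$. $\kappa^{\min}(h)$ is the smallest $k\ge 0$ such that there exist $f\in F(n+k,q)$ and $w\in\Pi([n+k])$ with $(f,w)$ sequentializing $h$, and $\kappa^{\min}_{n,q}=\max\{\kappa^{\min}(h): h\in F(n,q)\}$. *)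

(* Defs.v *)
From mathcomp Require Import all_boot.
From Stdlib Require Import Reals ZArith.
Set Implicit Arguments. Unset Strict Implicit. Unset Printing Implicit Defensive.

(* Alphabet A = {0,..,q-1} = 'I_q; coordinates [n] = {1,..,n} are indexed
   0-based by 'I_n.  A state in A^n is a finite function 'I_n -> 'I_q. *)
Definition state (n q : nat) := {ffun 'I_n -> 'I_q}.

Definition upd (m q : nat) (f : state m q -> state m q) (i : 'I_m)
  (x : state m q) : state m q :=
  [ffun j => if j == i then f x i else x j].

(* f^w = f^{w_t} o ... o f^{w_1}: apply w_1 first. *)
Definition upd_word (m q : nat) (f : state m q -> state m q) (w : seq 'I_m)
  (x : state m q) : state m q :=
  foldl (fun y i => upd f i y) x w.

Definition is_perm_word (m : nat) (w : seq 'I_m) : bool :=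
  uniq w && (size w == m).

Definition proj (n k q : nat) (x : state (n + k) q) : state n q :=
  [ffun j : 'I_n => x (lshift k j)].

Definition sequentializes (n k q : nat) (f : state (n + k) q -> state (n + k) q)
  (w : seq 'I_(n + k)) (h : state n q -> state n q) : Prop :=
  is_perm_word w /\ forall x, proj (upd_word f w x) = h (proj x).

Definition seqable (n q k : nat) (h : state n q -> state n q) : Prop :=
  exists f w, @sequentializes n k q f w h.

Definition kbound (n q : nat) : Z :=
  Int_part (INR n / 2 - ln (INR n) / ln (INR q))%R.

(* Main.v *)
Require Import Defs.
From Stdlib Require Import Reals Lra ZArith Lia.
Lemma kbound_lt (n q k : nat) : (4 <= q)%nat -> (1 <= n)%nat ->
  (kbound n q > Z.of_nat k)%Z -> (n * n * q ^ (2 * k + 2) <= q ^ n)%nat.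
Proof.
intros hq hn hk.
set (x := (INR n / 2 - ln (INR n) / ln (INR q))%R).
destruct (base_Int_part x) as [H1 _].
assert (hk' : (Z.of_nat k + 1 <= Int_part x)%Z) by (unfold kbound in hk; fold x in hk; lia).
apply IZR_le in hk'. rewrite plus_IZR, <- INR_IZR_INZ in hk'.
assert (Hq : (4 <= INR q)%R) by (replace 4%R with (INR 4) by (simpl; lra); apply le_INR; lia).
assert (Hn : (1 <= INR n)%R) by (replace 1%R with (INR 1) by (simpl; lra); apply le_INR; lia).
assert (lq : (0 < ln (INR q))%R) by (rewrite <- ln_1; apply ln_increasing; lra).
assert (Hx : (INR k + 1 <= x)%R) by lra.
unfold x in Hx.
assert (H2 : (2 * (INR k + 1) * ln (INR q) <= INR n * ln (INR q) - 2 * ln (INR n))%R).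
{ apply Rmult_le_compat_r with (r := (2 * ln (INR q))%R) in Hx; [|lra].
  replace ((INR n / 2 - ln (INR n) / ln (INR q)) * (2 * ln (INR q)))%R
    with (INR n * ln (INR q) - 2 * ln (INR n))%R in Hx by (field; lra).
  lra. }
assert (H3 : (ln (INR (n * n * q ^ (2 * k + 2))) <= ln (INR (q ^ n)))%R).
{ rewrite !mult_INR, !pow_INR.
  rewrite !ln_mult; try (apply pow_lt; lra); try lra; try (apply Rmult_lt_0_compat; lra).
  rewrite !ln_pow by lra.
  rewrite plus_INR, mult_INR. simpl (INR 2). lra. }
apply INR_le. destruct (Rle_or_lt (INR (n * n * q ^ (2 * k + 2))) (INR (q ^ n))) as [?|Hlt]; auto.
exfalso. apply ln_increasing in Hlt; [lra|].
rewrite pow_INR. apply pow_lt. lra.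
Qed.

From Stdlib Require Import ZArith.
From mathcomp Require Import all_boot.

Lemma kbound_lt' (n q k : nat) : 4 <= q -> 1 <= n ->
  (kbound n q > Z.of_nat k)%Z -> n * n * q ^ (2 * k + 2) <= q ^ n.
Proof.
have ep m e : m ^ e = Nat.pow m e by elim: e => // e IH; rewrite expnS IH.
by move=> /leP hq /leP hn hk; rewrite !ep; apply/leP; apply: kbound_lt.
Qed.

Set Implicit Arguments. Unset Strict Implicit. Unset Printing Implicit Defensive.


Section Cyl.
Variables (n q : nat).

Definition CylF (V : {set 'I_n}) (u : {ffun 'I_n -> 'I_q}) : forall i : 'I_n, pred 'I_q :=
  fun i => if i \in V then predT else pred1 (u i).
Definition Cyl (V : {set 'I_n}) (u : {ffun 'I_n -> 'I_q}) : {set {ffun 'I_n -> 'I_q}} :=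
  [set y | y \in family (CylF V u)].

Lemma CylP (V : {set 'I_n}) (u y : {ffun 'I_n -> 'I_q}) :
  reflect (forall i, i \notin V -> y i = u i) (y \in Cyl V u).
Proof.
rewrite inE; apply: (iffP familyP) => H i.
  by move=> iV; have := H i; rewrite /CylF (negbTE iV) /= => /eqP.
rewrite /CylF; case: ifP => [//|/negbT iV]; by rewrite inE /= H.
Qed.

Lemma card_Cyl (V : {set 'I_n}) (u : {ffun 'I_n -> 'I_q}) : #|Cyl V u| = q ^ #|V|.
Proof.
rewrite cardsE card_family foldrE big_map big_enum /=.
rewrite (eq_bigr (fun i => if i \in V then q else 1)); last first.
  by move=> i _; rewrite /CylF; case: ifP => _; rewrite ?card_ord ?card1.
by rewrite -big_mkcond /= prod_nat_const.
Qed.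
End Cyl.



Section Avg.
Variables (n q : nat).

Lemma sum_Cyl (V : {set 'I_n}) (B : {set {ffun 'I_n -> 'I_q}}) (z : {ffun 'I_n -> 'I_q}) :
  \sum_(u in Cyl (~: V) z) #|Cyl V u :&: B| = #|B|.
Proof.
rewrite (eq_bigr (fun u => \sum_(y in B) ((y \in Cyl V u) : nat))); last first.
  move=> u _; rewrite -sum1_card big_mkcond /= [RHS]big_mkcond /=.
  by apply: eq_bigr => y _; rewrite inE andbC; case: (y \in B); case: (y \in Cyl V u).
rewrite exchange_big /= -sum1_card.
apply: eq_bigr => y yB.
pose p := [ffun i => if i \in V then z i else y i] : {ffun 'I_n -> 'I_q}.
rewrite (bigD1 p) /=; last first.
  by apply/CylP => i; rewrite inE ffunE => /negPn ->.
have -> : y \in Cyl V p.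
  by apply/CylP => i iV; rewrite ffunE (negbTE iV).
rewrite big1 // => u /andP [/CylP uR up].
case: (boolP (y \in Cyl V u)) => // /CylP yu; case/eqP: up; apply/ffunP => i; rewrite ffunE.
case: ifP => iV; first by rewrite uR // inE iV.
by rewrite yu // iV.
Qed.

Lemma avg_Cyl (V : {set 'I_n}) (B : {set {ffun 'I_n -> 'I_q}}) (z : {ffun 'I_n -> 'I_q}) :
  exists u, q ^ (n - #|V|) * #|Cyl V u :&: B| <= #|B|.
Proof.
have cR : #|Cyl (~: V) z| = q ^ (n - #|V|).
  by rewrite card_Cyl cardsCs setCK card_ord.
have [/existsP //|/existsPn H] :=
  boolP [exists u : {ffun 'I_n -> 'I_q}, q ^ (n - #|V|) * #|Cyl V u :&: B| <= #|B|].
exfalso.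
have zR : z \in Cyl (~: V) z by apply/CylP.
have : #|Cyl (~: V) z| * #|B|.+1 <= #|Cyl (~: V) z| * #|B|.
  rewrite -{2}(sum_Cyl V B z) big_distrr /=.
  apply: (@leq_trans (\sum_(u in Cyl (~: V) z) #|B|.+1)).
    by rewrite sum_nat_const cR leqnn.
  by apply: leq_sum => u _; have := H u; rewrite cR ltnNge.
have R0 : 0 < #|Cyl (~: V) z| by apply/card_gt0P; exists z.
by rewrite leq_pmul2l // ltnn.
Qed.
End Avg.



Section Greedy.
Variables (n q a : nat) (z0 : {ffun 'I_n -> 'I_q}).
Local Notation F := {ffun 'I_n -> 'I_q}.

Definition Bu (u : {set 'I_n} -> F) (s : seq {set 'I_n}) : {set F} :=
  \bigcup_(X <- s) Cyl X (u X).

Lemma Bu_eq u u' s : {in s, u =1 u'} -> Bu u s = Bu u' s.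
Proof. by move=> H; apply: eq_big_seq => X /H ->. Qed.

Lemma card_Bu u s : all (fun X : {set 'I_n} => #|X| == a) s ->
  #|Bu u s| <= size s * q ^ a.
Proof.
elim: s => [|X s IH] /=; first by rewrite /Bu big_nil cards0.
case/andP => /eqP hX hs; rewrite /Bu big_cons cardsU mulSn.
apply: leq_trans (leq_subr _ _) _; rewrite card_Cyl hX leq_add2l.
exact: IH.
Qed.

Lemma mem_Bu u s y : reflect (exists2 X, X \in s & y \in Cyl X (u X)) (y \in Bu u s).
Proof.
elim: s => [|X s IH]; rewrite /Bu ?big_nil ?big_cons.
  by rewrite in_set0; constructor => -[].
rewrite in_setU; apply: (iffP orP) => [[yX|/IH [Y Ys yY]]|[Y]].
- by exists X; rewrite ?in_cons ?eqxx.
- by exists Y; rewrite // in_cons Ys orbT.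
rewrite in_cons => /orP [/eqP ->|Ys] yY; first by left.
by right; apply/IH; exists Y.
Qed.

Lemma greedy (L : seq {set 'I_n}) : uniq L -> all (fun X : {set 'I_n} => #|X| == a) L ->
  exists u : {set 'I_n} -> F, forall p, p < size L ->
    q ^ (n - a) * #|Cyl (nth set0 L p) (u (nth set0 L p)) :&: Bu u (take p L)|
      <= p * q ^ a.
Proof.
elim/last_ind: L => [|L V IH]; first by move=> _ _; exists (fun _ => z0).
rewrite rcons_uniq -cats1 all_cat /= andbT => /andP [VL uL] /andP [aL /eqP aV].
have [u' Hu'] := IH uL aL.
have [uV HuV] := avg_Cyl V (Bu u' L) z0.
exists (fun X => if X == V then uV else u' X) => p.
have eqB : Bu (fun X => if X == V then uV else u' X) L = Bu u' L.
  apply: Bu_eq => X XL /=; case: eqP => // XV; by move: VL; rewrite -XV XL.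
rewrite size_cat /= addn1 ltnS leq_eqVlt => /orP [/eqP ->|pL].
  rewrite takel_cat // take_size eqB nth_cat ltnn subnn /= eqxx.
  rewrite aV in HuV; exact: leq_trans HuV (card_Bu u' aL).
rewrite (takel_cat _ (ltnW pL)) nth_cat pL.
have XL : nth set0 L p \in L by apply: mem_nth.
have -> : (nth set0 L p == V) = false by apply/eqP => E; move: VL; rewrite -E XL.
rewrite (Bu_eq (u' := u')); first exact: Hu'.
move=> X /mem_take XL' /=; case: eqP => // XV; by move: VL; rewrite -XV XL'.
Qed.
End Greedy.



Section Snap.
Variables (n k q : nat).
Local Notation G := {ffun 'I_(n + k) -> 'I_q}.
Variable f : G -> G.

Lemma upd_word_notin (s : seq 'I_(n + k)) (x : G) i :
  i \notin s -> upd_word f s x i = x i.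
Proof.
elim: s x => [//|j s IH] x; rewrite in_cons negb_or => /andP [ij iS].
rewrite /upd_word /= -/(upd_word f s (upd f j x)) IH //.
by rewrite /upd ffunE (negbTE ij).
Qed.

Lemma upd_word_cat (s1 s2 : seq 'I_(n + k)) (x : G) :
  upd_word f (s1 ++ s2) x = upd_word f s2 (upd_word f s1 x).
Proof. by rewrite /upd_word foldl_cat. Qed.

Lemma split_lshift (i : 'I_n) : split (lshift k i) = inl i.
Proof. exact: (unsplitK (inl i)). Qed.
Lemma split_rshift (e : 'I_k) : split (rshift n e) = inr e.
Proof. exact: (unsplitK (inr e)). Qed.

Lemma snapshot (w : seq 'I_(n + k)) (h : {ffun 'I_n -> 'I_q} -> {ffun 'I_n -> 'I_q})
  (d : 'I_q) (j : nat) (D : {set {ffun 'I_n -> 'I_q}}) (u c : {ffun 'I_n -> 'I_q}) :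
  sequentializes f w h ->
  (forall y, y \in D -> forall i, lshift k i \notin take j w -> y i = u i) ->
  (forall y, y \in D -> forall i, lshift k i \in take j w -> h y i = c i) ->
  {in D &, injective h} -> #|D| <= q ^ k.
Proof.
move=> [/andP [uw _] Hs] HU HV Hinj.
pose ext (y : {ffun 'I_n -> 'I_q}) : G :=
  [ffun p => match split p with inl i => y i | inr _ => d end].
have pext y : proj (ext y) = y.
  by apply/ffunP => i; rewrite /proj !ffunE split_lshift.
pose st y := upd_word f (take j w) (ext y).
have fin y : h y = proj (upd_word f (drop j w) (st y)).
  by rewrite -{1}(pext y) -Hs /st -upd_word_cat cat_take_drop.
have dis p : p \in take j w -> p \notin drop j w.
  move: uw; rewrite -{1}(cat_take_drop j w) cat_uniq => /and3P [_ /hasPn H _] pt.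
  by apply/negP => /H; rewrite pt.
have stL y i : y \in D -> st y (lshift k i) = if lshift k i \in take j w then c i else u i.
  move=> yD; case: ifP => iV.
    rewrite -(HV y yD i iV) fin /proj ffunE upd_word_notin //; exact: dis.
  by rewrite /st upd_word_notin ?iV // ffunE split_lshift (HU y yD) ?iV.
pose g y : {ffun 'I_k -> 'I_q} := [ffun e => st y (rshift n e)].
have ginj : {in D &, injective g}.
  move=> y y' yD y'D E; apply: Hinj => //; rewrite !fin; congr (proj (upd_word _ _ _)).
  apply/ffunP => p; rewrite -(splitK p); case: (split p) => [i|e].
    by rewrite /= (stL y i yD) (stL y' i y'D).
  by move/ffunP: E => /(_ e); rewrite /g !ffunE.
by have := @leq_card_in _ _ g (mem D) ginj; rewrite card_ffun !card_ord.
Qed.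
End Snap.

Lemma ivt (g : nat -> nat) N a : g 0 = 0 -> (forall j, g j.+1 <= (g j).+1) ->
  a <= g N -> exists j, g j = a.
Proof.
move=> g0 gS; elim: N => [|N IH].
  by rewrite g0 leqn0 => /eqP ->; exists 0.
case: (leqP a (g N)) => [/IH //|ltNa] aS; exists N.+1.
by apply/eqP; rewrite eqn_leq aS andbT; apply: leq_trans (gS N) ltNa.
Qed.

Section Prefix.
Variables (n k : nat).

Lemma all_in_perm (w : seq 'I_(n + k)) : is_perm_word w -> forall t, t \in w.
Proof.
case/andP => uw /eqP sw t; apply/negPn/negP => tw.
have : size w <= size (enum (predC1 t)).
  apply: uniq_leq_size uw _ => x xw; rewrite mem_enum inE.
  by apply/eqP => E; rewrite -E xw in tw.
rewrite -cardE cardC1 card_ord sw.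
have Hp : 0 < n + k := leq_ltn_trans (leq0n t) (ltn_ord t).
by rewrite leqNgt ltn_predL Hp.
Qed.

Lemma prefix_card (w : seq 'I_(n + k)) a : is_perm_word w -> a <= n ->
  exists j, #|[set i : 'I_n | lshift k i \in take j w]| = a.
Proof.
move=> pw an.
pose g j := #|[set i : 'I_n | lshift k i \in take j w]|.
apply: (@ivt g (size w)) => [||].
- by apply: eq_card0 => i; rewrite inE take0.
- move=> j; rewrite /g; case: (ltnP j (size w)) => jw; last first.
    by rewrite !take_oversize ?(leq_trans jw) // leqnSn.
  have [x0 _] : exists x0 : 'I_(n + k), True by case: w {pw an g} jw => // x0 ? _; exists x0.
  rewrite (take_nth x0 jw); set t := nth x0 w j.
  have sub : [set i : 'I_n | lshift k i \in rcons (take j w) t] \subset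
      [set i | lshift k i == t] :|: [set i : 'I_n | lshift k i \in take j w].
    by apply/subsetP => i; rewrite !inE mem_rcons in_cons.
  apply: leq_trans (subset_leq_card sub) _; rewrite cardsU.
  apply: leq_trans (leq_subr _ _) _; rewrite -add1n leq_add2r.
  apply/card_le1_eqP => i1 i2; rewrite !inE => /eqP E1 /eqP E2.
  by apply: (@lshift_inj n k); rewrite E1 E2.
- rewrite /g take_size; apply: leq_trans an _; apply: eq_leq; rewrite -[LHS]card_ord.
  apply: eq_card => i; rewrite inE; symmetry; apply: all_in_perm pw _.
Qed.
End Prefix.



From mathcomp Require Import zify.

Lemma binom_pair m j : 'C(m, j) + 'C(m, j.+1) <= 2 ^ m.
Proof.
elim: m j => [|m IH] [|j] //.
  rewrite bin0 binS bin0 expnS; have := IH 0; rewrite bin0.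
  have : 0 < 2 ^ m by rewrite expn_gt0.
  lia.
rewrite !binS expnS.
have := IH j; have := IH j.+1; lia.
Qed.

Lemma binom_half m j : 0 < m -> 2 * 'C(m, j) <= 2 ^ m.
Proof.
case: m => // m _; case: j => [|j].
  by rewrite bin0 expnS leq_mul2l /= expn_gt0.
rewrite binS expnS leq_mul2l /= addnC; exact: binom_pair.
Qed.

Section Constr.
Variables (n q : nat) (hq : 4 <= q) (hn : 1 <= n).
Local Notation F := {ffun 'I_n -> 'I_q}.
Local Notation a := n./2.

Lemma a_le : a <= n - a.
Proof. have nE := odd_double_half n; rewrite -addnn in nE; lia. Qed.

Lemma key_binom : 2 * 'C(n, a) <= q ^ (n - a).
Proof.
have nE := odd_double_half n; rewrite -addnn in nE.
apply: leq_trans (binom_half _ hn) _.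
apply: (@leq_trans (2 ^ (2 * (n - a)))).
  by apply: leq_pexp2l => //; lia.
rewrite expnM; apply: leq_trans (_ : q ^ (n - a) <= _) => //.
by rewrite leq_exp2r //; lia.
Qed.

Definition pi (V : {set 'I_n}) (j : 'I_n) : 'I_n := nth j (enum V) (index j (enum (~: V))).

Lemma pi_surj (V : {set 'I_n}) : #|V| <= #|~: V| -> forall b, b \in V ->
  exists2 j0, j0 \in ~: V & pi V j0 = b.
Proof.
move=> hV b bV.
have rV : index b (enum V) < size (enum V) by rewrite index_mem mem_enum.
have rU : index b (enum V) < size (enum (~: V)) by rewrite -cardE; apply: leq_trans hV; rewrite cardE.
exists (nth b (enum (~: V)) (index b (enum V))).
  by rewrite -mem_enum mem_nth.
rewrite /pi index_uniq ?enum_uniq //.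
by rewrite (set_nth_default b) // nth_index // mem_enum.
Qed.


Lemma main_comb : exists h : state n q -> state n q,
  forall k, seqable k h -> q ^ a <= 2 * q ^ k.
Proof.
have q0 : 0 < q by apply: leq_trans hq.
pose z0 : F := [ffun _ => Ordinal q0].
pose L := enum [set V : {set 'I_n} | #|V| == a].
have uL : uniq L by apply: enum_uniq.
have memL V : (V \in L) = (#|V| == a) by rewrite mem_enum inE.
have aL : all (fun X : {set 'I_n} => #|X| == a) L by apply/allP => V; rewrite memL.
have [u Hu] := @greedy n q a z0 L uL aL.
pose D V := Cyl V (u V) :\: Bu u (take (index V L) L).
pose route (V : {set 'I_n}) (y : F) : F := [ffun i => if i \in V then u V i else y (pi V i)].
pose h (y : F) : F := if [pick V | (V \in L) && (y \in D V)] is Some V then route V y else y.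
have before V V' y : V \in L -> V' \in L -> index V' L < index V L ->
    y \in Cyl V' (u V') -> y \in Bu u (take (index V L) L).
  move=> VL V'L lt yC; apply/mem_Bu; exists V' => //.
  rewrite -(nth_index set0 V'L) -(nth_take set0 lt); apply: mem_nth.
  by rewrite size_take; case: ifP => // _; rewrite index_mem.
have hD V y : V \in L -> y \in D V -> h y = route V y.
  move=> VL yD; rewrite /h; case: pickP => [V' /andP [V'L yD'] | H]; last first.
    by have := H V; rewrite VL yD.
  suff -> : V' = V by [].
  move: yD yD'; rewrite /D !in_setD => /andP [nB yC] /andP [nB' yC'].
  case: (ltngtP (index V' L) (index V L)) => [lt|lt|eq].
  - by case/negP: nB; apply: (before V V' y).
  - by case/negP: nB'; apply: (before V' V y).
  - by rewrite -(nth_index set0 V'L) eq nth_index.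
have Dbound V : V \in L -> q ^ a <= 2 * #|D V|.
  move=> VL; have pL : index V L < size L by rewrite index_mem.
  have := Hu _ pL; rewrite nth_index //.
  have sL : size L = 'C(n, a) by rewrite -cardE card_draws card_ord.
  have cC : #|Cyl V (u V)| = q ^ a by rewrite card_Cyl; move: VL; rewrite memL => /eqP ->.
  rewrite /D cardsD cC => H.
  set x := #|_ :&: _| in H *.
  have H2 : q ^ (n - a) * (2 * x) <= q ^ (n - a) * q ^ a.
    rewrite mulnCA; apply: leq_trans (_ : 2 * (index V L * q ^ a) <= _).
      by rewrite leq_mul2l H orbT.
    rewrite mulnA mulnC [X in _ <= X]mulnC leq_mul2l; apply/orP; right.
    apply: leq_trans key_binom; rewrite -sL leq_mul2l; apply/orP; right; exact: ltnW.
  rewrite leq_pmul2l ?expn_gt0 ?q0 // in H2.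
  lia.
exists h => k [f [w Hs]].
have [j Hj] := prefix_card (proj1 Hs) (leq_trans a_le (leq_subr _ _)).
pose V := [set i : 'I_n | lshift k i \in take j w].
have VL : V \in L by rewrite memL Hj.
have VU : #|V| <= #|~: V|.
  move: (VL); rewrite memL => /eqP VE.
  have E := cardsC V; rewrite card_ord in E.
  rewrite -(leq_add2l #|V|) E VE; have := a_le; lia.
apply: leq_trans (Dbound V VL) _; rewrite leq_mul2l; apply/orP; right.
apply: (@snapshot n k q f w h (Ordinal q0) j (D V) (u V) (u V)) => //.
- move=> y; rewrite /D in_setD => /andP [_ /CylP yC] i iV; apply: yC; by rewrite inE.
- move=> y yD i iV; rewrite (hD V y VL yD) /route ffunE.
  by have -> : i \in V by rewrite inE.
- move=> y y' yD y'D; rewrite (hD V y VL yD) (hD V y' VL y'D) => E.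
  have /CylP yC : y \in Cyl V (u V) by move: yD; rewrite /D in_setD => /andP [].
  have /CylP y'C : y' \in Cyl V (u V) by move: y'D; rewrite /D in_setD => /andP [].
  apply/ffunP => i; case: (boolP (i \in V)) => iV; last by rewrite yC // y'C.
  have [j0 j0U <-] := pi_surj VU iV.
  move/ffunP: E => /(_ j0); rewrite /route !ffunE.
  by move: j0U; rewrite inE => /negbTE ->.
Qed.
End Constr.


Unset Implicit Arguments.

Lemma arith_core (n q P Q R : nat) : 4 <= q -> 1 <= n -> 1 <= Q -> P <= 2 * Q -> R <= q -> (n == 1) ==> (P == 1) ->
  n * n * (Q * Q * q * q) <= P * P * R -> False.
Proof.
move=> q4 n1 Q1 PQ Rq nP H.
have PP : P * P <= 4 * (Q * Q) by nia.
have h1 : (n * n * q * q) * (Q * Q) <= (4 * R) * (Q * Q).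
  apply: leq_trans (_ : P * P * R <= _); first by apply: leq_trans H; apply: eq_leq; rewrite !mulnA (mulnC _ q) ; nia.
  nia.
rewrite leq_pmul2r ?muln_gt0 ?Q1 // in h1.
have : n * n * q <= 4 by nia.
move=> h2; have n1' : n = 1 by nia.
move: nP; rewrite n1' eqxx /= => /eqP P1; subst P n.
nia.
Qed.

Lemma final_arith n q k : 4 <= q -> 1 <= n -> q ^ n./2 <= 2 * q ^ k ->
  n * n * q ^ (2 * k + 2) <= q ^ n -> False.
Proof.
move=> q4 n1 PQ H.
have q0 : 0 < q by apply: leq_trans q4.
have eq1 : q ^ (2 * k + 2) = q ^ k * q ^ k * q * q.
  by rewrite addn2 !expnS mul2n -addnn expnD; nia.
have eq2 : q ^ n = q ^ n./2 * q ^ n./2 * q ^ (odd n).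
  by rewrite -{1}(odd_double_half n) -addnn !expnD; nia.
rewrite eq1 eq2 in H.
apply: (@arith_core n q _ _ _ q4 n1 _ PQ _ _ H).
- by rewrite expn_gt0 q0.
- by case: (odd n); rewrite ?expn1 ?expn0.
- by apply/implyP => /eqP ->.
Qed.


From mathcomp Require Import all_boot.
From Stdlib Require Import ZArith.

Theorem mainTheorem6 (q n : nat) (hq : 4 <= q) (hn : 1 <= n) :
  exists h : state n q -> state n q,
    forall k : nat, seqable k h -> (kbound n q <= Z.of_nat k)%Z.
Proof.
have [h Hh] := main_comb hq hn.
exists h => k Hk; have H := Hh k Hk.
case: (Z.le_gt_cases (kbound n q) (Z.of_nat k)) => // Hlt; exfalso.
exact: (@final_arith n q k hq hn H (@kbound_lt' n q k hq hn (Z.lt_gt _ _ Hlt))).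
Qed.
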